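(* Let $Y$ be a strongly connected finite digraph on which a finite abelian group $G$ acts by automorphisms so that the action on $V_Y$ is free, let $H\le G$, $\Gamma=G/H$, $Z=Y_H$, $X=Y_G$, and let $F$ be an algebraically closed field of characteristic zero. Then $$N_\Gamma(\gamma_{Y/X}(u))=\gamma_{Y/Z}(u)\quad\text{in }F[H][u].$$
   Context: Digraph $Y=(V_Y,E_Y)$ with incidence $e\mapsto(o(e),t(e))$; strongly connected means a directed path exists between any two distinct vertices. For a group $K$ acting on $Y$ by automorphisms, $Y_K$ is the quotient digraph with vertices $K\backslash V_Y$, edges $K\backslash E_Y$ and induced incidence. $\mathcal{A}_Y(w)=\sum_{o(\varepsilon)=w}t(\varepsilon)$ on $\mathbb{Z}V_Y$ is $\mathbb{Z}[K]$-linear, and if $K$ acts freely on $V_Y$ then $\mathbb{Z}V_Y[u]$ is a free $\mathbb{Z}[K][u]$-module of rank $\#V_{Y_K}$. Define $\gamma_{Y/Y_K}(u)=\det_{\mathbb{Z}[K][u]}(\mathcal{I}-\mathcal{A}_Yu)\in\mathbb{Z}[K][u]$ (so $\gamma_{Y/X}$ uses $K=G$ and $\gamma_{Y/Z}$ uses $K=H$). Since $F[G][u]$ is a free $F[H][u]$-module of finite rank, $N_\Gamma:F[G][u]\to F[H][u]$ is defined by $N_\Gamma(P)=\det_{F[H][u]}(m_P)$, $m_P$ the multiplication-by-$P$ map on $F[G][u]$. *)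

(* Defs.v *)
From HB Require Import structures.
From mathcomp Require Import all_boot all_order all_algebra all_fingroup.
Set Implicit Arguments. Unset Strict Implicit. Unset Printing Implicit Defensive.
Import GRing.Theory.
Local Open Scope ring_scope.

(* The group ring R[gT] of a finite group gT over a ring R, realised  *)
(* as finitely supported functions gT -> R with convolution product.  *)
Definition galg (R : nzRingType) (gT : finGroupType) := {ffun gT -> R}.

Section GroupAlgebra.
Variables (R : nzRingType) (gT : finGroupType).
Local Notation A := (galg R gT).

HB.instance Definition _ := GRing.Zmodule.on A.

Definition galg_one : A := [ffun x => (x == 1%g)%:R].
Definition galg_mul (f g : A) : A :=
  [ffun x => \sum_(y : gT) f y * g (y^-1 * x)%g].

Lemma galg_mulA : associative galg_mul.
Proof.
move=> f g h; apply/ffunP=> x; rewrite !ffunE.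
under eq_bigr => y _ do rewrite ffunE big_distrr.
under [RHS]eq_bigr => z _ do rewrite ffunE big_distrl.
rewrite [RHS]exchange_big /=; apply: eq_bigr => y _.
rewrite [RHS](reindex_inj (mulgI y)) /=; apply: eq_bigr => w _.
by rewrite mulrA mulKg invMg mulgA.
Qed.

Lemma galg_mul1r : left_id galg_one galg_mul.
Proof.
move=> f; apply/ffunP=> x; rewrite ffunE (bigD1 1%g) //= ffunE eqxx invg1 mul1g mul1r.
rewrite big1 ?addr0 // => y /negPf ny; by rewrite ffunE ny mul0r.
Qed.

Lemma galg_mulr1 : right_id galg_one galg_mul.
Proof.
move=> f; apply/ffunP=> x; rewrite ffunE (bigD1 x) //= ffunE mulVg eqxx mulr1.
rewrite big1 ?addr0 // => y ny; rewrite ffunE.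
suff -> : ((y^-1 * x)%g == 1%g) = false by rewrite mulr0.
apply/negbTE; apply: contra ny => /eqP e.
by rewrite -(mulKVg y x) e mulg1.
Qed.

Lemma galg_mulDl : left_distributive galg_mul +%R.
Proof.
move=> f g h; apply/ffunP=> x; rewrite !ffunE -big_split /=.
by apply: eq_bigr => y _; rewrite ffunE mulrDl.
Qed.

Lemma galg_mulDr : right_distributive galg_mul +%R.
Proof.
move=> f g h; apply/ffunP=> x; rewrite !ffunE -big_split /=.
by apply: eq_bigr => y _; rewrite ffunE mulrDr.
Qed.

Lemma galg_one_neq0 : galg_one != 0.
Proof.
apply/eqP=> /ffunP /(_ 1%g); rewrite !ffunE eqxx => /eqP; by rewrite oner_eq0.
Qed.

HB.instance Definition _ := GRing.Zmodule_isNzRing.Build A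
  galg_mulA galg_mul1r galg_mulr1 galg_mulDl galg_mulDr galg_one_neq0.

Definition galg_delta (g : gT) : A := [ffun x => (x == g)%:R].
(* restriction to a subgroup H: R[gT] -> R[H] (as a subset of R[gT]) *)
Definition galg_res (H : {set gT}) (f : A) : A :=
  [ffun x => if x \in H then f x else 0].
End GroupAlgebra.

Definition galg_map (R S : nzRingType) (gT : finGroupType) (f : R -> S)
  (p : galg R gT) : galg S gT := [ffun x => f (p x)].

(* A digraph is given by finite vertex/edge types V, E and incidence  *)
Definition adj (V E : finType) (o t : E -> V) : rel V :=
  fun a b => [exists e, (o e == a) && (t e == b)].

Definition strongly_connected (V E : finType) (o t : E -> V) : Prop :=
  forall a b : V, a != b -> connect (adj o t) a b.

Section Gamma.
Variables (gT : finGroupType) (V E : finType) (o t : E -> V).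
Variables (toV : {action gT &-> V}).

Definition orbit_rep (K : {set gT}) (v : V) : V :=
  odflt v [pick y in orbit toV K v].
(* the vertex set of the quotient Y_K, as a set of representatives *)
Definition orbit_reps (K : {set gT}) : {set V} := [set orbit_rep K v | v : V].

(* Matrix (over Z[K], seen inside Z[gT]) of A_Y in the basis of        *)
(* orbit representatives r_1..r_n of the free Z[K]-module Z V_Y:       *)
(* A_Y(r_j) = sum_i M_ij r_i,  M_ij = sum_{e, o e = r_j, t e = k.r_i} k *)
Definition adj_galg (R : nzRingType) (K : {set gT}) :
  'M[galg R gT]_#|orbit_reps K| :=
  \matrix_(i, j) [ffun k : gT =>
     (#|[set e : E | (o e == enum_val j) && (t e == toV (enum_val i) k)]|
        * (k \in K))%:R].

Definition gamma (R : nzRingType) (K : {set gT}) : {poly galg R gT} :=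
  \det (\matrix_(i, j) ((i == j)%:R%:P - (adj_galg R K i j)%:P * 'X)).
End Gamma.

(* N_Gamma : F[gT][u] -> F[H][u] : det over F[H][u] of multiplication  *)
(* by P on F[gT][u], in the basis c_1..c_m of coset representatives.    *)
(* P c_j = sum_i c_i a_ij with a_ij = res_H (c_i^-1 P c_j).             *)
Section Norm.
Variables (R : nzRingType) (gT : finGroupType) (H : {group gT}).

Definition coset_rep (g : gT) : gT := odflt g [pick x in (g *: (H : {set gT}))%g].
Definition coset_reps : {set gT} := [set coset_rep g | g : gT].

Definition norm_mx (P : {poly galg R gT}) : 'M[{poly galg R gT}]_#|coset_reps| :=
  \matrix_(i, j) map_poly (fun p => galg_res H
      (galg_delta R (enum_val i)^-1%g * p * galg_delta R (enum_val j))) P.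

Definition NGamma (P : {poly galg R gT}) : {poly galg R gT} := \det (norm_mx P).
End Norm.

(* Main.v *)
Require Import Defs.
From HB Require Import structures.
From mathcomp Require Import all_boot all_order all_algebra all_fingroup.
From mathcomp Require Import zify ring.
Set Implicit Arguments. Unset Strict Implicit. Unset Printing Implicit Defensive.
Import GRing.Theory.
Local Open Scope ring_scope.


Lemma qo_proof p m (i : 'I_(p * m)) : (i %/ m < p)%N.
Proof.
case: m i => [|m'] i; first by case: i => i /=; rewrite muln0.
by rewrite ltn_divLR.
Qed.
Lemma ro_proof p m (i : 'I_(p * m)) : (i %% m < m)%N.
Proof.
case: m i => [|m'] i; first by case: i => i /=; rewrite muln0.
by rewrite ltn_pmod.
Qed.
Lemma pidx_proof p m (s : 'I_p) (t : 'I_m) : (s * m + t < p * m)%N.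
Proof. have := ltn_ord s; have := ltn_ord t; nia. Qed.

Definition qo p m (i : 'I_(p * m)) : 'I_p := Ordinal (qo_proof i).
Definition ro p m (i : 'I_(p * m)) : 'I_m := Ordinal (ro_proof i).
Definition pidx p m (s : 'I_p) (t : 'I_m) : 'I_(p * m) := Ordinal (pidx_proof s t).

Lemma qo_pidx p m s t : @qo p m (pidx s t) = s.
Proof.
apply: val_inj => /=; have := ltn_ord t; case: m t => [|m] t // ht.
by rewrite divnMDl // divn_small // addn0.
Qed.
Lemma ro_pidx p m s t : @ro p m (pidx s t) = t.
Proof. by apply: val_inj => /=; rewrite modnMDl modn_small. Qed.
Lemma pidx_qr p m i : pidx (@qo p m i) (ro i) = i.
Proof. by apply: val_inj => /=; rewrite -divn_eq. Qed.

Lemma sum_pidx (R : nmodType) p m (F : 'I_(p * m) -> R) :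
  \sum_x F x = \sum_(s < p) \sum_(t < m) F (pidx s t).
Proof.
rewrite pair_big /=.
rewrite (reindex (fun x : 'I_p * 'I_m => pidx x.1 x.2)) //=.
exists (fun i => (qo i, ro i)) => [[s t] _|i _] /=.
  by rewrite qo_pidx ro_pidx.
by rewrite pidx_qr.
Qed.

Lemma det_castmx (R : comNzRingType) n1 n2 (e : n1 = n2) (M : 'M[R]_n1) :
  \det (castmx (e, e) M) = \det M.
Proof. by case: n2 / e; rewrite castmx_id. Qed.

Section Blowup.
Variables (A : comNzRingType) (m : nat) (phi : A -> 'M[A]_m).
Hypothesis phiD : forall a b, phi (a + b) = phi a + phi b.
Hypothesis phiM : forall a b, phi (a * b) = phi a *m phi b.
Hypothesis phi1 : phi 1 = 1%:M.

Lemma phi0 : phi 0 = 0.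
Proof. by apply/eqP; rewrite -(addrI (phi 0) (_ : phi 0 + phi 0 = phi 0 + 0)) // -phiD !addr0. Qed.
Lemma phiN a : phi (- a) = - phi a.
Proof. by apply/eqP; rewrite -subr_eq0 opprK -phiD addNr phi0. Qed.
Lemma phi_sum I (r : seq I) (P : pred I) (F : I -> A) :
  phi (\sum_(i <- r | P i) F i) = \sum_(i <- r | P i) phi (F i).
Proof. exact: (big_morph phi phiD phi0). Qed.

Definition blowup p q (M : 'M[A]_(p,q)) : 'M[A]_(p * m, q * m) :=
  \matrix_(i, j) phi (M (qo i) (qo j)) (ro i) (ro j).

Lemma blowupE p q (M : 'M[A]_(p,q)) s t s' t' :
  blowup M (pidx s t) (pidx s' t') = phi (M s s') t t'.
Proof. by rewrite mxE !qo_pidx !ro_pidx. Qed.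

Lemma blowup_mul p q r (P : 'M[A]_(p,q)) (Q : 'M[A]_(q,r)) :
  blowup (P *m Q) = blowup P *m blowup Q.
Proof.
apply/matrixP => i j; rewrite !mxE phi_sum summxE sum_pidx.
apply: eq_bigr => s _; rewrite phiM mxE; apply: eq_bigr => t _.
by rewrite !mxE !qo_pidx !ro_pidx.
Qed.

Lemma blowup0 p q : blowup (0 : 'M[A]_(p,q)) = 0.
Proof. by apply/matrixP => i j; rewrite !mxE phi0 mxE. Qed.

Lemma blowup_block p1 p2 q1 q2 (Aul : 'M[A]_(p1,q1)) (Aur : 'M[A]_(p1,q2))
  (Adl : 'M[A]_(p2,q1)) (Adr : 'M[A]_(p2,q2)) :
  castmx (mulnDl p1 p2 m, mulnDl q1 q2 m) (blowup (block_mx Aul Aur Adl Adr)) =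
  block_mx (blowup Aul) (blowup Aur) (blowup Adl) (blowup Adr).
Proof.
apply/matrixP => i j; rewrite castmxE.
have qL p1' p2' (k : 'I_(p1' * m)) :
   qo (cast_ord (esym (mulnDl p1' p2' m)) (lshift (p2' * m) k)) = lshift p2' (qo k).
  by apply: val_inj.
have rL p1' p2' (k : 'I_(p1' * m)) :
   ro (cast_ord (esym (mulnDl p1' p2' m)) (lshift (p2' * m) k)) = ro k.
  by apply: val_inj.
have qR p1' p2' (k : 'I_(p2' * m)) :
   qo (cast_ord (esym (mulnDl p1' p2' m)) (rshift (p1' * m) k)) = rshift p1' (qo k).
  apply: val_inj => /=; case: k => k /=; case: (m) => [|m']; first by rewrite muln0.
  by move=> _; rewrite divnMDl.
have rR p1' p2' (k : 'I_(p2' * m)) :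
   ro (cast_ord (esym (mulnDl p1' p2' m)) (rshift (p1' * m) k)) = ro k.
  by apply: val_inj => /=; rewrite modnMDl.
rewrite -[i]splitK -[j]splitK; case: (split i) => i'; case: (split j) => j' /=;
  rewrite ?block_mxEul ?block_mxEur ?block_mxEdl ?block_mxEdr [in LHS]mxE ?qL ?rL ?qR ?rR;
  by rewrite ?block_mxEul ?block_mxEur ?block_mxEdl ?block_mxEdr [in RHS]mxE.
Qed.

Lemma det_blowup_block p1 p2 (Aul : 'M[A]_p1) Aur Adl (Adr : 'M[A]_p2) :
  \det (blowup (block_mx Aul Aur Adl Adr)) =
  \det (block_mx (blowup Aul) (blowup Aur) (blowup Adl) (blowup Adr)).
Proof. by rewrite -blowup_block det_castmx. Qed.

Lemma det_blowup11 (W : 'M[A]_1) : \det (blowup W) = \det (phi (W 0 0)).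
Proof.
rewrite -(det_castmx (mul1n m)); congr (\det _).
apply/matrixP => i j; rewrite castmxE mxE.
have -> : qo (cast_ord (esym (mul1n m)) i) = 0 by apply: val_inj => /=; rewrite divn_small.
have -> : qo (cast_ord (esym (mul1n m)) j) = 0 by apply: val_inj => /=; rewrite divn_small.
by congr (_ _ _); apply: val_inj => /=; rewrite modn_small.
Qed.

Lemma det_blowup_scalar n a : \det (blowup (a%:M : 'M[A]_n)) = \det (phi a) ^+ n.
Proof.
elim: n => [|n IH]; first by rewrite det_mx00 expr0.
have -> : \det (blowup (a%:M : 'M[A]_n.+1)) =
   \det (blowup (block_mx (a%:M : 'M_1) 0 0 (a%:M : 'M_n))).
  by rewrite -(scalar_mx_block 1 n a).
rewrite det_blowup_block !blowup0 det_ublock.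
by rewrite det_blowup11 mxE eqxx mulr1n IH exprS.
Qed.

Lemma det_phiX a n : \det (phi (a ^+ n)) = \det (phi a) ^+ n.
Proof.
elim: n => [|n IH]; first by rewrite expr0 phi1 det1.
by rewrite exprS phiM det_mulmx IH exprS.
Qed.

Variable eps : {rmorphism A -> A}.
Hypothesis eps_reg : forall a, eps a = 1 -> GRing.lreg a.
Hypothesis eps_phi : forall a, map_mx eps (phi a) = phi (eps a).

Theorem det_blowup n (M : 'M[A]_n) :
  map_mx eps M = 1%:M -> \det (blowup M) = \det (phi (\det M)).
Proof.
elim: n M => [|n IH] M hM.
  by rewrite [LHS]det_mx00 det_mx00 phi1 det1.
have [W [X [Y [Z eM]]]] : exists W X Y Z, M = @block_mx A 1 n 1 n W X Y Z.
  pose M' : 'M[A]_(1 + n) := M.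
  by exists (ulsubmx M'), (ursubmx M'), (dlsubmx M'), (drsubmx M'); rewrite submxK.
subst M.
have {}hM : map_mx eps (@block_mx A 1 n 1 n W X Y Z) = (1%:M : 'M_(1+n)) := hM.
rewrite map_block_mx (scalar_mx_block 1 n) in hM.
case/eq_block_mx: hM => hW hX hY hZ.
set w := W 0 0.
have ew : eps w = 1 by have := congr1 (fun M : 'M[A]_1 => M ord0 ord0) hW; rewrite !mxE.
pose L : 'M[A]_(1 + n) := block_mx 1%:M 0 (- Y) w%:M.
pose S := w *: Z - Y *m X.
have LM : L *m block_mx W X Y Z = block_mx W X 0 S.
  rewrite mulmx_block !mul1mx !mul0mx !addr0; congr block_mx.
  by rewrite [W]mx11_scalar mulNmx mul_mx_scalar mul_scalar_mx addNr.
  by rewrite mulNmx mul_scalar_mx addrC.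
have detL : \det L = w ^+ n by rewrite det_lblock det1 mul1r det_scalar.
have detWXS : \det (block_mx W X 0 S) = w * \det S.
  by rewrite det_ublock [W]mx11_scalar det_scalar1.
have eqA : w ^+ n * \det (block_mx W X Y Z) = w * \det S.
  by rewrite -detL -det_mulmx LM detWXS.
have hS : map_mx eps S = 1%:M.
  apply/matrixP => i j; rewrite !mxE rmorphB rmorphM /= ew mul1r rmorph_sum /=.
  rewrite big1 ?subr0.
    by have := congr1 (fun M : 'M[A]_n => M i j) hZ; rewrite !mxE.
  move=> k _; rewrite rmorphM /=.
  by have := congr1 (fun M : 'M[A]_(n,1) => M i k) hY; rewrite !mxE => ->; rewrite mul0r.
have IHS := IH S hS.
set d := \det (phi w).
have ed : eps d = 1.
  by rewrite /d -det_map_mx eps_phi ew phi1 det1.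
have dreg : GRing.lreg (d ^+ n) by apply/lregX/eps_reg.
have bLd : \det (blowup L) = d ^+ n.
  rewrite det_blowup_block !blowup0 det_lblock det_blowup11 mxE eqxx mulr1n phi1 det1.
  by rewrite mul1r det_blowup_scalar.
have bLM : \det (blowup (block_mx W X 0 S)) = d * \det (blowup S).
  by rewrite det_blowup_block !blowup0 det_ublock det_blowup11.
apply: dreg => /=.
rewrite -bLd -det_mulmx -blowup_mul LM bLM IHS.
rewrite bLd /d -det_phiX -det_mulmx -phiM.
rewrite -det_mulmx -phiM; exact: (congr1 (fun x => \det (phi x)) (esym eqA)).
Qed.

End Blowup.

Section GalgBasics.
Variables (R : nzRingType) (gT : finGroupType).
Implicit Types f g : galg R gT.

Lemma galg_mulE f g x : (f * g) x = \sum_y f y * g (y^-1 * x)%g.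
Proof. by rewrite ffunE. Qed.
Lemma galg_addE f g x : (f + g) x = f x + g x.
Proof. by rewrite ffunE. Qed.
Lemma galg_oppE f x : (- f) x = - f x.
Proof. by rewrite ffunE. Qed.
Lemma galg_0E x : (0 : galg R gT) x = 0.
Proof. by rewrite ffunE. Qed.
Lemma galg_1E x : (1 : galg R gT) x = (x == 1%g)%:R.
Proof. by rewrite ffunE. Qed.
Lemma galg_sumE I (r : seq I) (P : pred I) (F : I -> galg R gT) x :
  (\sum_(i <- r | P i) F i) x = \sum_(i <- r | P i) F i x.
Proof.
elim/big_rec2: _ => [|i y f _ <-]; first by rewrite galg_0E.
by rewrite galg_addE.
Qed.
Lemma galg_natE n x : (n%:R : galg R gT) x = (n * (x == 1%g))%:R.
Proof.
elim: n => [|n IH]; first by rewrite mul0n galg_0E.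
by rewrite mulrS galg_addE IH galg_1E mulSn natrD.
Qed.
Lemma deltaE (a x : gT) : galg_delta R a x = (x == a)%:R.
Proof. by rewrite ffunE. Qed.
Lemma delta1 : galg_delta R (1%g : gT) = 1.
Proof. by apply/ffunP => x; rewrite !ffunE. Qed.
Lemma mul_deltal a f x : (galg_delta R a * f) x = f (a^-1 * x)%g.
Proof.
rewrite galg_mulE (bigD1 a) //= deltaE eqxx mul1r big1 ?addr0 // => y /negPf ny.
by rewrite deltaE ny mul0r.
Qed.
Lemma mul_deltar f a x : (f * galg_delta R a) x = f (x * a^-1)%g.
Proof.
rewrite galg_mulE (bigD1 (x * a^-1)%g) //= deltaE invMg invgK mulgKV eqxx mulr1.
rewrite big1 ?addr0 // => y ny; rewrite deltaE.
case: eqP => [e|]; last by rewrite mulr0.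
by case/eqP: ny; rewrite -e invMg invgK mulKVg.
Qed.
Lemma delta_mul (a b : gT) : galg_delta R a * galg_delta R b = galg_delta R (a * b).
Proof.
apply/ffunP => x; rewrite mul_deltal !deltaE.
by rewrite -(inj_eq (mulgI a)) mulKVg.
Qed.
Lemma resE (H : {set gT}) f x : galg_res H f x = if x \in H then f x else 0.
Proof. by rewrite ffunE. Qed.

End GalgBasics.

Section GalgMap.
Variables (R1 R2 : nzRingType) (gT : finGroupType) (f : {rmorphism R1 -> R2}).

Lemma galg_mapE (p : galg R1 gT) x : galg_map f p x = f (p x).
Proof. by rewrite ffunE. Qed.

Lemma galg_map_is_zmod : zmod_morphism (galg_map (gT := gT) f).
Proof. by move=> p q; apply/ffunP => x; rewrite !(galg_mapE, galg_addE, galg_oppE) rmorphB. Qed.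
HB.instance Definition _ := GRing.isZmodMorphism.Build _ _ (galg_map (gT := gT) f) galg_map_is_zmod.

Lemma galg_map_is_monoid : monoid_morphism (galg_map (gT := gT) f).
Proof.
split.
  by apply/ffunP => x; rewrite galg_mapE !galg_1E rmorph_nat.
move=> p q; apply/ffunP => x; rewrite galg_mapE !galg_mulE rmorph_sum.
by apply: eq_bigr => y _; rewrite rmorphM !galg_mapE.
Qed.
HB.instance Definition _ := GRing.isMonoidMorphism.Build _ _ (galg_map (gT := gT) f) galg_map_is_monoid.
End GalgMap.

Definition cgalg (R : comNzRingType) (gT : finGroupType) (Hab : abelian [set: gT]) := galg R gT.
HB.instance Definition _ R gT Hab := GRing.NzRing.on (@cgalg R gT Hab).
Lemma cgalg_mulC R gT Hab : commutative (@GRing.mul (@cgalg R gT Hab)).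
Proof.
move=> p q; apply/ffunP => x; rewrite !galg_mulE.
rewrite (reindex_inj (inj_comp (mulgI x) (@invg_inj gT))) /=.
apply: eq_bigr => z _; rewrite invMg invgK mulgKV mulrC; congr (_ * p _).
by apply/esym/(centsP Hab); rewrite inE.
Qed.
HB.instance Definition _ R gT Hab :=
  GRing.PzRing_hasCommutativeMul.Build (@cgalg R gT Hab) (@cgalg_mulC R gT Hab).

Section Cosets.
Variables (gT : finGroupType) (Hab : abelian [set: gT]) (H : {group gT}).

Lemma gcomm (x y : gT) : (x * y = y * x)%g.
Proof. by apply/(centsP Hab); rewrite inE. Qed.

Lemma coset_rep_in g : coset_rep H g \in (g *: H)%g.
Proof.
rewrite /coset_rep; case: pickP => [y //|/(_ g)]; by rewrite lcoset_refl.
Qed.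

Lemma coset_rep_eq g g' : (g *: H = g' *: H)%g -> coset_rep H g = coset_rep H g'.
Proof.
move=> e; rewrite /coset_rep.
have E : (fun x => x \in (g *: H)%g) =1 (fun x => x \in (g' *: H)%g) by move=> x; rewrite e.
rewrite (eq_pick E); case: pickP => [x _ //|/(_ g')].
by rewrite lcoset_refl.
Qed.

Lemma coset_reps_uniq a b : a \in coset_reps H -> b \in coset_reps H ->
  a \in (b *: H)%g -> a = b.
Proof.
rewrite /coset_reps => /imsetP [x _ ->] /imsetP [y _ ->] hin.
apply: coset_rep_eq.
have ex := coset_rep_in x; have ey := coset_rep_in y.
have e1 : (coset_rep H x *: H)%g = (x *: H)%g by apply/lcoset_eqP.
have e2 : (coset_rep H y *: H)%g = (y *: H)%g by apply/lcoset_eqP.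
by rewrite -e1 -e2; apply/lcoset_eqP.
Qed.

Definition crep (s : 'I_#|coset_reps H|) : gT := enum_val s.
Lemma crep_in s : crep s \in coset_reps H.
Proof. exact: enum_valP. Qed.
Lemma crep_inj : injective crep.
Proof. exact: enum_val_inj. Qed.

Lemma crep_unique x : exists s0, forall s, (crep s \in (x *: H)%g) = (s == s0).
Proof.
have hr : coset_rep H x \in coset_reps H by apply: imset_f.
exists (enum_rank_in hr (coset_rep H x)) => s.
apply/idP/eqP => [hs|->]; last by rewrite /crep enum_rankK_in // coset_rep_in.
apply: crep_inj; rewrite /crep enum_rankK_in //.
apply: coset_reps_uniq => //; first exact: crep_in.
have e1 : (coset_rep H x *: H)%g = (x *: H)%g by apply/lcoset_eqP/coset_rep_in.
by rewrite e1.
Qed.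

Lemma crep_sameP s s' : (crep s \in (crep s' *: H)%g) = (s == s').
Proof.
apply/idP/eqP => [h|->]; last exact: lcoset_refl.
by apply: crep_inj; apply: coset_reps_uniq => //; apply: crep_in.
Qed.

Lemma crep_decomp g : exists s h, h \in H /\ g = (crep s * h)%g.
Proof.
have hr : coset_rep H g \in coset_reps H by apply: imset_f.
exists (enum_rank_in hr (coset_rep H g)).
rewrite /crep enum_rankK_in //.
have := coset_rep_in g; rewrite mem_lcoset => hin.
exists ((coset_rep H g)^-1 * g)%g; split.
  by rewrite -groupV invMg invgK.
by rewrite mulKVg.
Qed.

End Cosets.

Lemma lreg_coef0 (R : comNzRingType) (p : {poly R}) : p`_0 = 1 -> GRing.lreg p.
Proof.
move=> p0; apply/mulrI0_lreg => q pq0; apply/polyP => i; rewrite coef0.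
elim: i {-2}i (leqnn i) => [|n IH] i hi.
  move: hi; rewrite leqn0 => /eqP ->.
  by have := congr1 (fun r : {poly R} => r`_0) pq0; rewrite coefM big_ord1 p0 mul1r coef0.
have := congr1 (fun r : {poly R} => r`_i) pq0; rewrite coefM big_ord_recl p0 mul1r subn0 coef0.
rewrite big1 ?addr0 // => j _; rewrite IH ?mulr0 //.
rewrite lift0; lia.
Qed.

Section RLevel.
Variables (gT : finGroupType) (Hab : abelian [set: gT]) (H : {group gT}) (F : comNzRingType).
Local Notation R := (cgalg F Hab).
Local Notation m := #|coset_reps H|.

Definition dl (a : gT) : R := galg_delta F a.
Definition rs (p : R) : R := galg_res H p.

Lemma rsE p x : rs p x = if x \in H then p x else 0.
Proof. exact: resE. Qed.
Lemma dlE a x : dl a x = (x == a)%:R.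
Proof. exact: deltaE. Qed.

Lemma rsD p q : rs (p + q) = rs p + rs q.
Proof. by apply/ffunP => x; rewrite !(rsE, galg_addE); case: ifP; rewrite ?addr0. Qed.
Lemma rs0 : rs 0 = 0.
Proof. by apply/ffunP => x; rewrite !(rsE, galg_0E); case: ifP. Qed.
Lemma rsN p : rs (- p) = - rs p.
Proof. by apply/ffunP => x; rewrite !(rsE, galg_oppE); case: ifP; rewrite ?oppr0. Qed.
Lemma rs_sum I (r : seq I) (P : pred I) (G : I -> R) :
  rs (\sum_(i <- r | P i) G i) = \sum_(i <- r | P i) rs (G i).
Proof. exact: (big_morph rs rsD rs0). Qed.

Lemma rs_mul_rs p y : rs (rs p * y) = rs p * rs y.
Proof.
apply/ffunP => x; rewrite rsE !galg_mulE.
case: ifP => xH.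
  apply: eq_bigr => z _; rewrite !rsE; case: ifP => zH; rewrite ?mul0r //.
  by rewrite groupM ?groupV ?xH.
rewrite big1 // => z _; rewrite !rsE; case: ifP => zH; rewrite ?mul0r //.
case: ifP => zxH; rewrite ?mulr0 //.
by move: xH; rewrite -(mulKVg z x) groupM.
Qed.

Lemma dlM a b : dl a * dl b = dl (a * b).
Proof. exact: delta_mul. Qed.
Lemma dl1 : dl 1 = 1.
Proof. exact: delta1. Qed.
Lemma rs_dl g : rs (dl g) = if g \in H then dl g else 0.
Proof.
apply/ffunP => x; rewrite rsE; case xH: (x \in H); case gH: (g \in H) => //.
- by rewrite galg_0E dlE; case: eqP => // exg; move: gH; rewrite -exg xH.
- by rewrite dlE; case: eqP => // exg; move: xH; rewrite exg gH.
- by rewrite galg_0E.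
Qed.

Lemma mul_dlE a p x : (dl a * p) x = p (a^-1 * x)%g.
Proof. exact: mul_deltal. Qed.

Lemma decompR P : \sum_(s < m) dl (crep s)^-1 * rs (dl (crep s) * P) = P.
Proof.
apply/ffunP => x; rewrite galg_sumE.
have [s0 hs0] := @crep_unique _ H (x^-1)%g.
rewrite (bigD1 s0) //= big1 ?addr0.
  rewrite mul_dlE invgK rsE mul_dlE mulKg.
  have := hs0 s0; rewrite eqxx mem_lcoset invgK gcomm // => -> //.
move=> s ns; rewrite mul_dlE invgK rsE mul_dlE mulKg.
by have := hs0 s; rewrite (negPf ns) mem_lcoset invgK gcomm // => ->.
Qed.

End RLevel.

Section PolyLevel.
Variables (gT : finGroupType) (Hab : abelian [set: gT]) (H : {group gT}) (F : comNzRingType).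
Local Notation R := (cgalg F Hab).
Local Notation m := #|coset_reps H|.

Definition RS (p : {poly R}) : {poly R} := map_poly (@rs _ Hab H F) p.
Definition Dp (a : gT) : {poly R} := (dl Hab F a)%:P.

Lemma coef_RS p i : (RS p)`_i = rs H p`_i.
Proof. by rewrite coef_map_id0 // rs0. Qed.
Lemma RS_C c : RS c%:P = (rs H c)%:P.
Proof. by apply/polyP => i; rewrite coef_RS !coefC; case: eqP; rewrite ?rs0. Qed.
Lemma RSD p q : RS (p + q) = RS p + RS q.
Proof. by apply/polyP => i; rewrite coefD !coef_RS coefD rsD. Qed.
Lemma RS0 : RS 0 = 0.
Proof. by apply/polyP => i; rewrite coef_RS !coef0 rs0. Qed.
Lemma RSN p : RS (- p) = - RS p.
Proof. by apply/polyP => i; rewrite coefN !coef_RS coefN rsN. Qed.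
Lemma RS_sum I (r : seq I) (P : pred I) (G : I -> {poly R}) :
  RS (\sum_(i <- r | P i) G i) = \sum_(i <- r | P i) RS (G i).
Proof. exact: (big_morph RS RSD RS0). Qed.

Lemma RS_mul_RS p y : RS (RS p * y) = RS p * RS y.
Proof.
apply/polyP => i; rewrite coef_RS !coefM rs_sum; apply: eq_bigr => j _.
by rewrite !coef_RS rs_mul_rs.
Qed.

Lemma DpM a b : Dp a * Dp b = Dp (a * b).
Proof. by rewrite /Dp -polyCM dlM. Qed.
Lemma Dp1 : Dp 1 = 1.
Proof. by rewrite /Dp dl1. Qed.
Lemma RS_Dp g : RS (Dp g) = if g \in H then Dp g else 0.
Proof. by rewrite /Dp RS_C rs_dl; case: ifP. Qed.

Lemma decompB P : \sum_(s < m) Dp (crep s)^-1 * RS (Dp (crep s) * P) = P.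
Proof.
apply/polyP => i; rewrite coef_sum -[RHS](decompR H).
by apply: eq_bigr => s _; rewrite coefCM coef_RS coefCM.
Qed.

Definition phi (b : {poly R}) : 'M[{poly R}]_m :=
  \matrix_(k, l) RS (Dp (crep k)^-1 * Dp (crep l) * b).

Lemma phiD a b : phi (a + b) = phi a + phi b.
Proof. by apply/matrixP => k l; rewrite !mxE mulrDr RSD. Qed.

Lemma phi1 : phi 1 = 1%:M.
Proof.
apply/matrixP => k l; rewrite !mxE mulr1 DpM RS_Dp -mem_lcoset.
rewrite crep_sameP eq_sym; case: eqP => [->|]; last by [].
by rewrite mulVg Dp1.
Qed.

Lemma phiM a b : phi (a * b) = phi a *m phi b.
Proof.
apply/matrixP => k l; rewrite !mxE.
pose a' := Dp (crep k)^-1 * a; pose b' := Dp (crep l) * b.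
have -> : Dp (crep k)^-1 * Dp (crep l) * (a * b) = a' * b'.
  by rewrite /a' /b'; ring.
rewrite -{1}(decompB a') mulr_suml RS_sum; apply: eq_bigr => s _; rewrite !mxE.
have -> : Dp (crep s)^-1 * RS (Dp (crep s) * a') * b' =
          RS (Dp (crep s) * a') * (Dp (crep s)^-1 * b') by ring.
rewrite RS_mul_RS /a' /b'; congr (RS _ * RS _); ring.
Qed.
End PolyLevel.

Section EvNorm.
Variables (gT : finGroupType) (Hab : abelian [set: gT]) (H : {group gT}) (F : comNzRingType).
Local Notation R := (cgalg F Hab).
Local Notation m := #|coset_reps H|.

Definition ev0 : {rmorphism {poly R} -> {poly R}} := (polyC \o horner_eval 0)%FUN.

Lemma ev0E p : ev0 p = (p`_0)%:P.
Proof. by rewrite /= /horner_eval horner_coef0. Qed.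

Lemma ev0_reg a : ev0 a = 1 -> GRing.lreg a.
Proof. by rewrite ev0E => /polyC_inj; apply: lreg_coef0. Qed.

Lemma ev0_phi a : map_mx ev0 (phi H a) = phi H (ev0 a).
Proof.
apply/matrixP => k l; rewrite !mxE !ev0E coef_RS DpM coefCM.
by rewrite /Dp -polyCM RS_C.
Qed.

Lemma norm_mx_phi (b : {poly R}) :
  (norm_mx (R := F) H (b : {poly galg F gT}) : 'M[{poly R}]_m) = phi H b.
Proof.
apply/matrixP => k l; rewrite !mxE; apply/polyP => i.
rewrite coef_map_id0; last by rewrite mulr0 mul0r; apply/ffunP => x; rewrite !ffunE; case: ifP.
rewrite coef_RS DpM coefCM.
change (rs H (dl Hab F (crep k)^-1 * b`_i * dl Hab F (crep l)) = rs H (dl Hab F ((crep k)^-1 * crep l) * b`_i)).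
by rewrite -dlM mulrAC.
Qed.
End EvNorm.

Section Graph.
Variables (gT : finGroupType) (V E : finType) (o t : E -> V)
  (toV : {action gT &-> V}) (toE : {action gT &-> E})
  (Habel : abelian [set: gT])
  (Ho : forall e g, o (toE e g) = toV (o e) g)
  (Ht : forall e g, t (toE e g) = toV (t e) g)
  (Hfree : forall v g, toV v g = v -> g = 1%g)
  (H : {group gT}).

Lemma orbit_rep_in (K : {group gT}) v : orbit_rep toV K v \in orbit toV K v.
Proof.
rewrite /orbit_rep; case: pickP => [y //|/(_ v)]; by rewrite orbit_refl.
Qed.

Lemma orbit_rep_eq (K : {group gT}) v w :
  w \in orbit toV K v -> orbit_rep toV K w = orbit_rep toV K v.
Proof.
move/orbit_eqP => e; rewrite /orbit_rep.
have Ee : (fun x => x \in orbit toV K w) =1 (fun x => x \in orbit toV K v) by move=> x; rewrite e.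
rewrite (eq_pick Ee); case: pickP => [x _ //|/(_ v)].
by rewrite orbit_refl.
Qed.

Lemma orbit_rep_id (K : {group gT}) r : r \in orbit_reps toV K -> orbit_rep toV K r = r.
Proof.
case/imsetP => v _ ->; apply: orbit_rep_eq; exact: orbit_rep_in.
Qed.

Lemma mem_orbit_reps (K : {set gT}) v : orbit_rep toV K v \in orbit_reps toV K.
Proof. exact: imset_f. Qed.

Lemma act_free r a b : toV r a = toV r b -> a = b.
Proof.
move=> e; have : toV r (a * b^-1)%g = r by rewrite actM e -actM mulgV act1.
by move/Hfree/eqP; rewrite -eq_mulgV1 => /eqP.
Qed.

Definition hh (v : V) : gT := odflt 1%g [pick h in H | toV v h == orbit_rep toV H v].
Lemma hhP v : hh v \in H /\ toV v (hh v) = orbit_rep toV H v.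
Proof.
rewrite /hh; case: pickP => [h /andP [hH /eqP] //|].
have /orbitP [h hH eh] := orbit_rep_in H v.
by move/(_ h); rewrite hH eh eqxx.
Qed.

Local Notation n := #|orbit_reps toV [set: gT]|.
Local Notation N := #|orbit_reps toV H|.
Local Notation m := #|coset_reps H|.

Definition rG (j : 'I_n) : V := enum_val j.
Definition rH (s : 'I_N) : V := enum_val s.

Definition vtx (j : 'I_n) (k : 'I_m) : V := toV (rG j) (crep k).
Definition beta (j : 'I_n) (k : 'I_m) : 'I_N :=
  enum_rank_in (mem_orbit_reps H (vtx j k)) (orbit_rep toV H (vtx j k)).

Lemma rH_beta j k : rH (beta j k) = toV (vtx j k) (hh (vtx j k)).
Proof. by rewrite /rH /beta enum_rankK_in ?mem_orbit_reps //; case: (hhP (vtx j k)). Qed.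

Lemma rG_in j : rG j \in orbit_reps toV [set: gT].
Proof. exact: enum_valP. Qed.

Lemma beta_inj j k j' k' : beta j k = beta j' k' -> j = j' /\ k = k'.
Proof.
move=> e; have := congr1 rH e; rewrite !rH_beta /vtx -!actM => e2.
have jj : j = j'.
  apply: enum_val_inj; rewrite -/(rG j) -/(rG j').
  rewrite -(orbit_rep_id (rG_in j)) -(orbit_rep_id (rG_in j')).
  apply: orbit_rep_eq; apply/orbitP.
  exists ((crep k' * hh (toV (rG j') (crep k'))) * (crep k * hh (toV (rG j) (crep k)))^-1)%g.
    by rewrite inE.
  by rewrite actM -e2 -actM mulgV act1.
subst j'; split => //.
have [h1H _] := hhP (vtx j k); have [h2H _] := hhP (vtx j k').
rewrite /vtx in h1H h2H.
move: e2; set h1 := hh _; set h2 := hh _ => e2.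
have e3 := act_free e2.
apply/eqP; rewrite -crep_sameP; apply/lcosetP.
exists (h2 * h1^-1)%g; first by rewrite groupM ?groupV.
by rewrite mulgA -e3 mulgK.
Qed.
Lemma rH_beta' j k : rH (beta j k) = orbit_rep toV H (vtx j k).
Proof. by rewrite /rH /beta enum_rankK_in ?mem_orbit_reps. Qed.

Lemma beta_surj s : exists j k, beta j k = s.
Proof.
have vin : rH s \in orbit_reps toV H by apply: enum_valP.
set v := rH s in vin.
pose r := orbit_rep toV [set: gT] v.
have rin : r \in orbit_reps toV [set: gT] by apply: mem_orbit_reps.
exists (enum_rank_in rin r).
have : v \in orbit toV [set: gT] r by rewrite orbit_sym; apply: orbit_rep_in.
case/orbitP => g _ eg.
have [k [h [hH eg2]]] := @crep_decomp _ H g.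
exists k; apply: enum_val_inj; rewrite -/(rH (beta _ _)) rH_beta'.
change (orbit_rep toV H (vtx (enum_rank_in rin r) k) = v).
rewrite -[RHS](orbit_rep_id vin); apply: orbit_rep_eq; apply/orbitP.
exists h^-1%g; first by rewrite groupV.
by rewrite /vtx /rG enum_rankK_in // -eg eg2 -actM mulgK.
Qed.

Definition bb (x : 'I_(n * m)) : 'I_N := beta (qo x) (ro x).

Lemma bb_inj : injective bb.
Proof.
move=> x y /beta_inj [e1 e2].
by rewrite -(pidx_qr x) -(pidx_qr y) e1 e2.
Qed.

Lemma card_nm : (n * m)%N = N.
Proof.
apply/eqP; rewrite eqn_leq; apply/andP; split.
  by have := leq_card bb bb_inj; rewrite !card_ord.
have sub : [set: 'I_N] \subset bb @: [set: 'I_(n * m)].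
  apply/subsetP => s _; have [j [k e]] := beta_surj s.
  by apply/imsetP; exists (pidx j k) => //; rewrite /bb qo_pidx ro_pidx.
have e1 : #|[set: 'I_N]| = N by rewrite cardsT card_ord.
have e2 : #|[set: 'I_(n * m)]| = (n * m)%N by rewrite cardsT card_ord.
have h := subset_leq_card sub.
have h2 : #|bb @: [set: 'I_(n * m)]| = #|[set: 'I_(n * m)]| := card_imset _ bb_inj.
rewrite -e1; apply: leq_trans h _.
by rewrite h2 e2.
Qed.

End Graph.

Lemma det_reindex (R : comNzRingType) p q (f : 'I_p -> 'I_q) (finj : injective f)
  (hpq : p = q) (M : 'M[R]_q) : \det (\matrix_(i, j) M (f i) (f j)) = \det M.
Proof.
subst q; pose s := perm finj.
have -> : \matrix_(i, j) M (f i) (f j) = row_perm s (col_perm s M).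
  by apply/matrixP => i j; rewrite !mxE !permE.
rewrite row_permE col_permE !det_mulmx !det_perm odd_permV.
by rewrite mulrCA -signr_addb addbb expr0 mulr1.
Qed.

Lemma det_scale_rc (R : comNzRingType) n (u v : 'I_n -> R) (X : 'M[R]_n) :
  \det (\matrix_(i, j) (u i * X i j * v j)) = (\prod_i u i) * (\prod_i v i) * \det X.
Proof.
have -> : \matrix_(i, j) (u i * X i j * v j) =
    diag_mx (\row_i u i) *m X *m diag_mx (\row_i v i).
  by apply/matrixP => i j; rewrite mul_mx_diag mul_diag_mx !mxE.
rewrite !det_mulmx !det_diag.
under eq_bigr do rewrite mxE.
under [in X in _ * X = _]eq_bigr do rewrite mxE.
by rewrite mulrAC.
Qed.

Section AbEq. Local Open Scope group_scope.
Variables (gT : finGroupType) (Hab : abelian [set: gT]).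
Lemma ab_eq (ck cl h1 h2 z : gT) :
  ((ck^-1 * cl)^-1 * ((h1^-1 * h2)^-1 * z) = ck * h1 * z * (cl * h2)^-1)%g.
Proof.
have C := @gcomm gT Hab.
rewrite !invMg !invgK.
rewrite (C cl^-1 ck) (C h2^-1 cl^-1) -!mulgA; congr (ck * _)%g.
rewrite [in RHS](C z) [in RHS](C h1) -!mulgA; congr (cl^-1 * (h2^-1 * _)); exact: C.
Qed.
End AbEq.

Section Final.
Variables (gT : finGroupType) (V E : finType) (o t : E -> V)
  (toV : {action gT &-> V}) (toE : {action gT &-> E})
  (Habel : abelian [set: gT])
  (Ho : forall e g, o (toE e g) = toV (o e) g)
  (Ht : forall e g, t (toE e g) = toV (t e) g)
  (Hfree : forall v g, toV v g = v -> g = 1%g)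
  (H : {group gT}) (F : comNzRingType).
Local Notation R := (cgalg F Habel).

Definition aK (K : {set gT}) (i j : 'I_#|orbit_reps toV K|) : R :=
  [ffun g => (#|[set e | (o e == enum_val j) && (t e == toV (enum_val i) g)]| * (g \in K))%:R].
Definition MK (K : {set gT}) : 'M[{poly R}]_#|orbit_reps toV K| :=
  \matrix_(i, j) (((i == j)%:R : R)%:P - (aK i j)%:P * 'X).

Lemma gamma_map (K : {set gT}) :
  (map_poly (galg_map (intr : {rmorphism int -> F})) (gamma o t toV int K) : {poly R}) = \det (MK K).
Proof.
rewrite /gamma -det_map_mx.
have -> : map_mx (map_poly (galg_map (intr : {rmorphism int -> F})))
   (\matrix_(i, j) ((i == j)%:R%:P - (adj_galg o t toV int K i j)%:P * 'X)) =
   (MK K : 'M[{poly galg F gT}]_#|orbit_reps toV K|).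
  apply/matrixP => i j; rewrite !mxE rmorphB rmorphM /= !map_polyC map_polyX /=.
  congr (_%:P - _%:P * 'X).
    by rewrite rmorph_nat.
  by apply/ffunP => g; rewrite !ffunE rmorph_nat.
by [].
Qed.

Lemma card_shift a b g1 g2 :
  #|[set e | (o e == toV a g1) && (t e == toV b g2)]| =
  #|[set e | (o e == a) && (t e == toV b (g2 * g1^-1)%g)]|.
Proof.
rewrite -[RHS](card_imset _ (act_inj toE g1)); apply: eq_card => e.
rewrite inE; apply/idP/imsetP => [/andP [/eqP oe /eqP te]|[e' ]].
  exists (toE e g1^-1%g); last by rewrite -actM mulVg act1.
  by rewrite inE Ho Ht oe te -!actM mulgV act1 !eqxx.
rewrite inE => /andP [/eqP oe /eqP te] ->.
by rewrite Ho Ht oe te -actM mulgKV !eqxx.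
Qed.

Lemma lin_form (c d p q : R) :
  p%:P * (c%:P - d%:P * 'X) * q%:P = (p * c * q)%:P - (p * d * q)%:P * 'X.
Proof. by rewrite !polyCM; ring. Qed.

Lemma RS_lin (c d : R) : RS H (c%:P - d%:P * 'X) = (rs H c)%:P - (rs H d)%:P * 'X.
Proof.
apply/polyP => i; rewrite coef_RS !coefB !coefC !coefMX !coefC.
by case: i => [|[|i]] /=; rewrite ?rsD ?rsN ?rs0 ?subr0 ?sub0r.
Qed.

Lemma ev0_MK (K : {set gT}) : map_mx (ev0 Habel F) (MK K) = 1%:M.
Proof.
apply/matrixP => i j; rewrite !mxE ev0E coefB coefC coefMX subr0 /=.
by case: eqP.
Qed.

Local Notation n := #|orbit_reps toV [set: gT]|.
Local Notation m := #|coset_reps H|.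

Lemma entry_id j1 k j2 l :
  dl Habel F (hh toV H (vtx j1 k))^-1 *
    rs H (dl Habel F (crep k)^-1 * dl Habel F (crep l) * ((j1 == j2)%:R : R)) *
    dl Habel F (hh toV H (vtx j2 l))
  = ((beta (toV := toV) (H := H) j1 k == beta j2 l)%:R : R).
Proof.
case: (boolP (beta (toV := toV) (H := H) j1 k == beta j2 l)) => [/eqP e|ne].
  have [<- <-] := beta_inj Hfree e.
  rewrite eqxx mulr1 dlM mulVg dl1 -dl1 rs_dl group1 dl1 mulr1 dlM mulVg dl1.
  by [].
case: (eqVneq j1 j2) => [ej|nj]; last by rewrite mulr0 rs0 mulr0 mul0r.
subst j2; rewrite (_ : true%:R = 1 :> R) // mulr1 dlM rs_dl -mem_lcoset crep_sameP.
case: eqP => [ekl|]; last by rewrite mulr0 mul0r.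
by move: ne; rewrite ekl eqxx.
Qed.

Lemma enum_val_beta j k :
  enum_val (beta (toV := toV) (H := H) j k) = toV (rG j) (crep k * hh toV H (vtx j k))%g.
Proof. by rewrite -/(rH _) rH_beta /vtx actM. Qed.

Lemma entry_adj j1 k j2 l :
  dl Habel F (hh toV H (vtx j1 k))^-1 *
    rs H (dl Habel F (crep k)^-1 * dl Habel F (crep l) * aK (K := [set: gT]) j1 j2) *
    dl Habel F (hh toV H (vtx j2 l))
  = aK (beta (toV := toV) (H := H) j1 k) (beta j2 l).
Proof.
have [h1H _] := hhP toV H (vtx j1 k); have [h2H _] := hhP toV H (vtx j2 l).

move: h1H h2H; set h1 := hh toV H (vtx j1 k); set h2 := hh toV H (vtx j2 l) => h1H h2H.
rewrite mulrAC !dlM; apply/ffunP => z.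
rewrite mul_dlE rsE mul_dlE !ffunE !enum_val_beta -/h1 -/h2.
rewrite groupMl; last by rewrite groupV groupM ?groupV.
case zH: (z \in H); last by rewrite muln0.
rewrite inE muln1 card_shift muln1 -actM (ab_eq Habel) mulgA.
by [].
Qed.

Lemma lin_form2 (c d p : R) :
  p%:P * (c%:P - d%:P * 'X) = (p * c)%:P - (p * d)%:P * 'X.
Proof. by rewrite !polyCM; ring. Qed.

Lemma entry j1 k j2 l :
  MK H (beta (toV := toV) (H := H) j1 k) (beta j2 l) =
  Dp Habel F (hh toV H (vtx j1 k))^-1 * phi H (MK [set: gT] j1 j2) k l *
  Dp Habel F (hh toV H (vtx j2 l)).
Proof.
rewrite !mxE /Dp -polyCM lin_form2 RS_lin lin_form.
by rewrite entry_id entry_adj.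
Qed.

Lemma main_eq :
  NGamma H (map_poly (galg_map (intr : {rmorphism int -> F})) (gamma o t toV int [set: gT]))
  = map_poly (galg_map (intr : {rmorphism int -> F})) (gamma o t toV int H).
Proof.
rewrite /NGamma (gamma_map [set: gT]) (gamma_map H) norm_mx_phi.
change (\det (phi H (\det (MK [set: gT]))) = (\det (MK H) : {poly R})).
rewrite -(det_blowup (@phiD _ Habel H F) (@phiM _ Habel H F) (@phi1 _ Habel H F)
   (@ev0_reg _ Habel F) (@ev0_phi _ Habel H F) (ev0_MK _)).
rewrite -(det_reindex (@bb_inj _ _ _ Hfree H) (card_nm Hfree H) (MK H)).
pose u (x : 'I_(n * m)) := Dp Habel F (hh toV H (vtx (qo x) (ro x)))^-1.
pose v (x : 'I_(n * m)) := Dp Habel F (hh toV H (vtx (qo x) (ro x))).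
have -> : \matrix_(i, j) MK H (bb i) (bb j) =
    \matrix_(i, j) (u i * blowup (@phi _ Habel H F) (MK [set: gT]) i j * v j).
  apply/matrixP => x y; rewrite [LHS]mxE [RHS]mxE /bb entry /u /v.
  congr (_ * _ * _); by rewrite [RHS]mxE.
rewrite det_scale_rc -big_split big1 ?mul1r // => x _.
by rewrite /u /v /= DpM mulVg Dp1.
Qed.
End Final.

Unset Implicit Arguments.
Set Strict Implicit.

Theorem theorem3p5
  (gT : finGroupType) (V E : finType) (o t : E -> V)
  (toV : {action gT &-> V}) (toE : {action gT &-> E})
  (Habel : abelian [set: gT])
  (Hsc : strongly_connected o t)
  (Ho : forall e g, o (toE e g) = toV (o e) g)
  (Ht : forall e g, t (toE e g) = toV (t e) g)
  (Hfree : forall v g, toV v g = v -> g = 1%g)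
  (H : {group gT})
  (F : closedFieldType) (HF : [pchar F] =i pred0) :
  let intF := fun z : int => (z%:~R : F) in
  NGamma H (map_poly (galg_map intF) (gamma o t toV int [set: gT]))
  = map_poly (galg_map intF) (gamma o t toV int H).
Proof.
move=> intF.
exact: (main_eq Habel Ho Ht Hfree H F).
Qed.
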